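(* Let $\rho>0$ and $\epsilon>0$. Suppose that $({\mathbf{x}}_1,{\mathbf{y}}_1,{\mathbf{y}}_2,{\mathbf{x}}_2,{\mathbf{z}}_1,{\mathbf{z}}_2)$ is an $\epsilon$-primal-dual stationary point of the penalty problem $\min_{{\mathbf{x}}_1,{\mathbf{y}}_1,{\mathbf{y}}_2}\max_{{\mathbf{x}}_2,{\mathbf{z}}_1,{\mathbf{z}}_2}P_\rho$ (in the sense defined in the context) and that $$\rho^{-1}\Big(\max_{{\mathbf{x}}_2',{\mathbf{z}}_1',{\mathbf{z}}_2'}P_\rho({\mathbf{x}}_1,{\mathbf{x}}_2',{\mathbf{y}}_1,{\mathbf{y}}_2,{\mathbf{z}}_1',{\mathbf{z}}_2')-f_{\text{low}}\Big)\le O(\epsilon).$$ Then $({\mathbf{x}}_1,{\mathbf{y}}_1,{\mathbf{y}}_2)$ is an $O(\epsilon)$-KKT point of the bilevel minimax problem described in the context.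
   Context: Bilevel minimax problem: $\min_{{\mathbf{x}}_1,{\mathbf{y}}_1,{\mathbf{y}}_2}\{\max_{{\mathbf{x}}_2} f({\mathbf{x}}_1,{\mathbf{x}}_2,{\mathbf{y}}_1,{\mathbf{y}}_2) : ({\mathbf{y}}_1,{\mathbf{y}}_2)\in\arg\min_{{\mathbf{z}}_1}\max_{{\mathbf{z}}_2}\tilde f({\mathbf{x}}_1,{\mathbf{z}}_1,{\mathbf{z}}_2)\}$, where the lower-level condition means that $({\mathbf{y}}_1,{\mathbf{y}}_2)$ is a saddle point of $\tilde f({\mathbf{x}}_1,\cdot,\cdot)$, i.e. ${\mathbf{y}}_1\in\arg\min_{{\mathbf{z}}_1}\tilde f({\mathbf{x}}_1,{\mathbf{z}}_1,{\mathbf{y}}_2)$ and ${\mathbf{y}}_2\in\arg\max_{{\mathbf{z}}_2}\tilde f({\mathbf{x}}_1,{\mathbf{y}}_1,{\mathbf{z}}_2)$; a saddle point of $\tilde f({\mathbf{x}}_1,\cdot,\cdot)$ is assumed to exist for every ${\mathbf{x}}_1$. Here $f=f_1({\mathbf{x}}_1,{\mathbf{x}}_2,{\mathbf{y}}_1,{\mathbf{y}}_2)+f_2({\mathbf{x}}_1)-f_3({\mathbf{x}}_2)$ and $\tilde f=\tilde f_1({\mathbf{x}}_1,{\mathbf{y}}_1,{\mathbf{y}}_2)+\tilde f_2({\mathbf{y}}_1)-\tilde f_3({\mathbf{y}}_2)$. Standing assumptions: $\mathcal X_1=\mathrm{dom} f_2$, $\mathcal X_2=\mathrm{dom} f_3$,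 $\mathcal Y_1=\mathrm{dom}\tilde f_2$, $\mathcal Y_2=\mathrm{dom}\tilde f_3$ are compact; $f_1$ is concave in ${\mathbf{x}}_2$ and $L_{\nabla f_1}$-smooth on $\mathcal X_1\times\mathcal X_2\times\mathcal Y_1\times\mathcal Y_2$; $\tilde f_1$ is convex in ${\mathbf{y}}_1$, concave in ${\mathbf{y}}_2$ and $L_{\nabla\tilde f_1}$-smooth on $\mathcal X_1\times\mathcal Y_1\times\mathcal Y_2$; $f_2,f_3,\tilde f_2,\tilde f_3$ are proper closed convex with exactly computable proximal operators. Define $p({\mathbf{x}}_1,{\mathbf{y}}_1)=\max_{{\mathbf{z}}_2}\tilde f({\mathbf{x}}_1,{\mathbf{y}}_1,{\mathbf{z}}_2)$, $d({\mathbf{x}}_1,{\mathbf{y}}_2)=\min_{{\mathbf{z}}_1}\tilde f({\mathbf{x}}_1,{\mathbf{z}}_1,{\mathbf{y}}_2)$, and $f_{\text{low}}=\min\{f({\mathbf{x}}_1,{\mathbf{x}}_2,{\mathbf{y}}_1,{\mathbf{y}}_2):({\mathbf{x}}_1,{\mathbf{x}}_2,{\mathbf{y}}_1,{\mathbf{y}}_2)\in\mathcal X_1\times\mathcal X_2\times\mathcal Y_1\times\mathcal Y_2\}$. $\partial$ denotes the (Fréchet) subdifferential $\partial\phi({\mathbf{x}})=\{v:\phi({\mathbf{x}}')\ge\phi({\mathbf{x}})+\langle v,{\mathbf{x}}'-{\mathbf{x}}\rangle+o(\|{\mathbf{x}}'-{\mathbf{x}}\|)\}$ and $\partial_{{\mathbf{z}}}$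 the partial subdifferential in the sub-vector ${\mathbf{z}}$. Penalty function: $P_\rho({\mathbf{x}}_1,{\mathbf{x}}_2,{\mathbf{y}}_1,{\mathbf{y}}_2,{\mathbf{z}}_1,{\mathbf{z}}_2)=f({\mathbf{x}}_1,{\mathbf{x}}_2,{\mathbf{y}}_1,{\mathbf{y}}_2)+\rho\big(\tilde f({\mathbf{x}}_1,{\mathbf{y}}_1,{\mathbf{z}}_2)-\tilde f({\mathbf{x}}_1,{\mathbf{z}}_1,{\mathbf{y}}_2)\big)$. $\epsilon$-primal-dual stationary point: $({\mathbf{x}}_1,{\mathbf{y}}_1,{\mathbf{y}}_2,{\mathbf{x}}_2,{\mathbf{z}}_1,{\mathbf{z}}_2)$ with $\mathrm{dist}(0,\partial_{({\mathbf{x}}_1,{\mathbf{y}}_1,{\mathbf{y}}_2)}P_\rho)\le\epsilon$ and $\mathrm{dist}(0,\partial_{({\mathbf{x}}_2,{\mathbf{z}}_1,{\mathbf{z}}_2)}(-P_\rho))\le\epsilon$ at that point. $\epsilon$-KKT point of the bilevel problem: $({\mathbf{x}}_1,{\mathbf{y}}_1,{\mathbf{y}}_2)$ such that there exist $\rho\ge0$ and $({\mathbf{x}}_2,{\mathbf{z}}_1,{\mathbf{z}}_2)$ with $\mathrm{dist}(0,\partial_{({\mathbf{x}}_1,{\mathbf{y}}_1,{\mathbf{y}}_2)}[f({\mathbf{x}}_1,{\mathbf{x}}_2,{\mathbf{y}}_1,{\mathbf{y}}_2)+\rho(\tilde f({\mathbf{x}}_1,{\mathbf{y}}_1,{\mathbf{z}}_2)-\tilde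 f({\mathbf{x}}_1,{\mathbf{z}}_1,{\mathbf{y}}_2))])\le\epsilon$, $\mathrm{dist}(0,\partial_{{\mathbf{x}}_2}[-f({\mathbf{x}}_1,{\mathbf{x}}_2,{\mathbf{y}}_1,{\mathbf{y}}_2)])\le\epsilon$, $\mathrm{dist}(0,\rho\partial_{{\mathbf{z}}_1}\tilde f({\mathbf{x}}_1,{\mathbf{z}}_1,{\mathbf{y}}_2))\le\epsilon$, $\mathrm{dist}(0,\rho\partial_{{\mathbf{z}}_2}[-\tilde f({\mathbf{x}}_1,{\mathbf{y}}_1,{\mathbf{z}}_2)])\le\epsilon$, and $p({\mathbf{x}}_1,{\mathbf{y}}_1)-d({\mathbf{x}}_1,{\mathbf{y}}_2)\le\epsilon$. $O(\epsilon)$ denotes a quantity bounded by a constant independent of $\epsilon$ times $\epsilon$. *)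

(* Defs.v *)
From HB Require Import structures.
From mathcomp Require Import all_boot all_order all_algebra.
From mathcomp Require Import all_classical all_reals all_analysis.
Set Implicit Arguments. Unset Strict Implicit. Unset Printing Implicit Defensive.
Import Order.TTheory GRing.Theory Num.Theory.
Import numFieldNormedType.Exports.
Local Open Scope ring_scope.
Local Open Scope classical_set_scope.

Section EuclidDefs.
Context {R : realType}.

Definition dotv n (u v : 'rV[R]_n) : R := \sum_(i < n) u ord0 i * v ord0 i.
Definition enorm n (u : 'rV[R]_n) : R := Num.sqrt (dotv u u).

Definition edom n (g : 'rV[R]_n -> \bar R) : set 'rV[R]_n :=
  [set x | (g x < +oo)%E].

Definition proper_fun n (g : 'rV[R]_n -> \bar R) : Prop :=
  (forall x, g x != -oo%E) /\ exists x, g x \is a fin_num.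
Definition convex_fun n (g : 'rV[R]_n -> \bar R) : Prop :=
  forall (x y : 'rV[R]_n) (t : R), 0 < t < 1 ->
    (g (t *: x + (1 - t) *: y)%R <= t%:E * g x + (1 - t)%:E * g y)%E.
Definition lsc_fun n (g : 'rV[R]_n -> \bar R) : Prop :=
  forall (x : 'rV[R]_n) (a : R), (a%:E < g x)%E ->
    exists d : R, 0 < d /\ forall x' : 'rV[R]_n, enorm (x' - x) < d -> (a%:E < g x')%E.
Definition proper_closed_convex n (g : 'rV[R]_n -> \bar R) : Prop :=
  [/\ proper_fun g, convex_fun g & lsc_fun g].

Definition convex_on n (S : set 'rV[R]_n) (g : 'rV[R]_n -> R) : Prop :=
  forall (x y : 'rV[R]_n) (t : R), S x -> S y -> 0 < t < 1 ->
    g (t *: x + (1 - t) *: y) <= t * g x + (1 - t) * g y.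
Definition concave_on n (S : set 'rV[R]_n) (g : 'rV[R]_n -> R) : Prop :=
  forall (x y : 'rV[R]_n) (t : R), S x -> S y -> 0 < t < 1 ->
    t * g x + (1 - t) * g y <= g (t *: x + (1 - t) *: y).

Definition has_grad n (g : 'rV[R]_n -> R) (x gr : 'rV[R]_n) : Prop :=
  forall e : R, 0 < e -> exists d : R, 0 < d /\
    forall h, enorm h < d -> `|g (x + h) - g x - dotv gr h| <= e * enorm h.
Definition smooth_on n (L : R) (S : set 'rV[R]_n) (g : 'rV[R]_n -> R) : Prop :=
  exists grad : 'rV[R]_n -> 'rV[R]_n,
    (forall x, S x -> has_grad g x (grad x)) /\
    (forall x y, S x -> S y -> enorm (grad x - grad y) <= L * enorm (x - y)).

(* Frechet subdifferential: v in d phi(x) iff phi(x) finite and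
   phi(x') >= phi(x) + <v, x'-x> + o(|x'-x|)  (written out in eps-delta form) *)
Definition frechet_subdiff n (phi : 'rV[R]_n -> \bar R) (x : 'rV[R]_n)
  : set 'rV[R]_n :=
  [set v | phi x \is a fin_num /\
     forall e : R, 0 < e -> exists d : R, 0 < d /\
       forall x' : 'rV[R]_n, enorm (x' - x) < d ->
         (phi x + ((dotv v (x' - x) - e * enorm (x' - x))%R)%:E <= phi x')%E].

(* dist(0, S) (= +oo if S is empty) *)
Definition dist0 n (S : set 'rV[R]_n) : \bar R :=
  ereal_inf [set (enorm v)%:E | v in S].

Definition blkA a b c (u : 'rV[R]_(a + (b + c))) : 'rV[R]_a := lsubmx u.
Definition blkB a b c (u : 'rV[R]_(a + (b + c))) : 'rV[R]_b := lsubmx (rsubmx u).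
Definition blkC a b c (u : 'rV[R]_(a + (b + c))) : 'rV[R]_c := rsubmx (rsubmx u).
Definition blk4A a b c d (u : 'rV[R]_(a + (b + (c + d)))) : 'rV[R]_a := lsubmx u.
Definition blk4B a b c d (u : 'rV[R]_(a + (b + (c + d)))) : 'rV[R]_b :=
  lsubmx (rsubmx u).
Definition blk4C a b c d (u : 'rV[R]_(a + (b + (c + d)))) : 'rV[R]_c :=
  lsubmx (rsubmx (rsubmx u)).
Definition blk4D a b c d (u : 'rV[R]_(a + (b + (c + d)))) : 'rV[R]_d :=
  rsubmx (rsubmx (rsubmx u)).

End EuclidDefs.

Section ProblemDefs.
Context {R : realType} {n1 n2 m1 m2 : nat}.
Variables (f1 : 'rV[R]_n1 -> 'rV[R]_n2 -> 'rV[R]_m1 -> 'rV[R]_m2 -> R)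
          (f2 : 'rV[R]_n1 -> \bar R) (f3 : 'rV[R]_n2 -> \bar R)
          (tf1 : 'rV[R]_n1 -> 'rV[R]_m1 -> 'rV[R]_m2 -> R)
          (tf2 : 'rV[R]_m1 -> \bar R) (tf3 : 'rV[R]_m2 -> \bar R).

Definition fF x1 x2 y1 y2 : \bar R :=
  ((f1 x1 x2 y1 y2)%:E + f2 x1 - f3 x2)%E.
Definition tfF x1 y1 y2 : \bar R :=
  ((tf1 x1 y1 y2)%:E + tf2 y1 - tf3 y2)%E.

Definition Pen (rho : R) x1 x2 y1 y2 z1 z2 : \bar R :=
  (fF x1 x2 y1 y2 + rho%:E * (tfF x1 y1 z2 - tfF x1 z1 y2))%E.

Definition pfun x1 y1 : \bar R := ereal_sup (range (fun z2 => tfF x1 y1 z2)).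
Definition dfun x1 y2 : \bar R := ereal_inf (range (fun z1 => tfF x1 z1 y2)).

Definition flow : \bar R :=
  ereal_inf [set e | exists x1 x2 y1 y2,
    [/\ edom f2 x1, edom f3 x2, edom tf2 y1, edom tf3 y2 &
        e = fF x1 x2 y1 y2]].

Definition maxPen rho x1 y1 y2 : \bar R :=
  ereal_sup (range (fun w : 'rV[R]_n2 * 'rV[R]_m1 * 'rV[R]_m2 =>
                      Pen rho x1 w.1.1 y1 y2 w.1.2 w.2)).

Definition pd_stationary (rho eps : R) x1 y1 y2 x2 z1 z2 : Prop :=
  (dist0 (frechet_subdiff
     (fun u : 'rV[R]_(n1 + (m1 + m2)) =>
        Pen rho (blkA u) x2 (blkB u) (blkC u) z1 z2)
     (row_mx x1 (row_mx y1 y2))) <= eps%:E)%E /\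
  (dist0 (frechet_subdiff
     (fun u : 'rV[R]_(n2 + (m1 + m2)) =>
        - Pen rho x1 (blkA u) y1 y2 (blkB u) (blkC u))
     (row_mx x2 (row_mx z1 z2))) <= eps%:E)%E.

Definition eps_KKT (eps : R) x1 y1 y2 : Prop :=
  exists rho : R, 0 <= rho /\ exists x2 z1 z2,
  [/\ (dist0 (frechet_subdiff
         (fun u : 'rV[R]_(n1 + (m1 + m2)) =>
            Pen rho (blkA u) x2 (blkB u) (blkC u) z1 z2)
         (row_mx x1 (row_mx y1 y2))) <= eps%:E)%E,
      (dist0 (frechet_subdiff (fun u => - fF x1 u y1 y2) x2) <= eps%:E)%E,
      (dist0 [set rho *: v | v in frechet_subdiff (fun u => tfF x1 u y2) z1]
         <= eps%:E)%E,
      (dist0 [set rho *: v | v in frechet_subdiff (fun u => - tfF x1 y1 u) z2]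
         <= eps%:E)%E &
      (pfun x1 y1 - dfun x1 y2 <= eps%:E)%E].

Definition standing_assumptions (Lf Ltf : R) : Prop :=
  [/\ [/\ proper_closed_convex f2, proper_closed_convex f3,
          proper_closed_convex tf2 & proper_closed_convex tf3],
      [/\ compact (edom f2), compact (edom f3),
          compact (edom tf2) & compact (edom tf3)],
      [/\ (forall x1 y1 y2, edom f2 x1 -> edom tf2 y1 -> edom tf3 y2 ->
         concave_on (edom f3) (fun x2 => f1 x1 x2 y1 y2)),
      0 <= Lf &
      smooth_on Lf
        [set u : 'rV[R]_(n1 + (n2 + (m1 + m2))) | edom f2 (blk4A u) /\
           edom f3 (blk4B u) /\ edom tf2 (blk4C u) /\ edom tf3 (blk4D u)]
        (fun u => f1 (blk4A u) (blk4B u) (blk4C u) (blk4D u))],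
      [/\ (forall x1 y2, edom f2 x1 -> edom tf3 y2 ->
             convex_on (edom tf2) (fun y1 => tf1 x1 y1 y2)),
          (forall x1 y1, edom f2 x1 -> edom tf2 y1 ->
             concave_on (edom tf3) (fun y2 => tf1 x1 y1 y2)),
          0 <= Ltf &
          smooth_on Ltf
            [set u : 'rV[R]_(n1 + (m1 + m2)) | edom f2 (blkA u) /\
               edom tf2 (blkB u) /\ edom tf3 (blkC u)]
            (fun u => tf1 (blkA u) (blkB u) (blkC u))] &
      (forall x1, exists y1 y2,
         (forall z1, (tfF x1 y1 y2 <= tfF x1 z1 y2)%E) /\
         (forall z2, (tfF x1 y1 z2 <= tfF x1 y1 y2)%E))].

End ProblemDefs.

(* Main.v *)
Require Import Defs.
From HB Require Import structures.
From mathcomp Require Import all_boot all_order all_algebra.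
From mathcomp Require Import all_classical all_reals all_analysis.
From mathcomp Require Import lra.
Import Order.TTheory GRing.Theory Num.Theory.
Import numFieldNormedType.Exports.
Local Open Scope ring_scope.
Local Open Scope classical_set_scope.

Section Helpers.
Context {R : realType}.

Lemma dotv_row (a b : nat) (u1 v1 : 'rV[R]_a) (u2 v2 : 'rV[R]_b) :
  dotv (row_mx u1 u2) (row_mx v1 v2) = dotv u1 v1 + dotv u2 v2.
Proof.
rewrite /dotv big_split_ord /=; congr (_ + _); apply: eq_bigr => i _.
  by rewrite !row_mxEl.
by rewrite !row_mxEr.
Qed.

Lemma dotv0r n (u : 'rV[R]_n) : dotv u 0 = 0.
Proof. by rewrite /dotv big1 // => i _; rewrite mxE mulr0. Qed.

Lemma dotvZl n (k : R) (u v : 'rV[R]_n) : dotv (k *: u) v = k * dotv u v.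
Proof. rewrite /dotv mulr_sumr; apply: eq_bigr => i _; by rewrite mxE mulrA. Qed.

Lemma dotv_ge0 n (u : 'rV[R]_n) : 0 <= dotv u u.
Proof. by rewrite /dotv sumr_ge0 // => i _; rewrite -expr2 sqr_ge0. Qed.

Lemma enorm_row a b (u1 : 'rV[R]_a) (u2 : 'rV[R]_b) :
  enorm (row_mx u1 u2) = Num.sqrt (dotv u1 u1 + dotv u2 u2).
Proof. by rewrite /enorm dotv_row. Qed.

Lemma enorm_lsub a b (v : 'rV[R]_(a + b)) : enorm (lsubmx v) <= enorm v.
Proof.
rewrite -{2}(hsubmxK v) enorm_row /enorm ler_sqrt; last first.
  by rewrite addr_ge0 // dotv_ge0.
by rewrite lerDl dotv_ge0.
Qed.

Lemma enorm_rsub a b (v : 'rV[R]_(a + b)) : enorm (rsubmx v) <= enorm v.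
Proof.
rewrite -{2}(hsubmxK v) enorm_row /enorm ler_sqrt; last first.
  by rewrite addr_ge0 // dotv_ge0.
by rewrite lerDr dotv_ge0.
Qed.

Lemma enorm_row0l a b (u : 'rV[R]_b) : enorm (row_mx (0 : 'rV[R]_a) u) = enorm u.
Proof. by rewrite enorm_row /dotv big1 ?add0r // => i _; rewrite mxE mul0r. Qed.

Lemma enorm_row0r a b (u : 'rV[R]_a) : enorm (row_mx u (0 : 'rV[R]_b)) = enorm u.
Proof. by rewrite enorm_row dotv0r addr0. Qed.

Lemma dist0_mono n n' (S : set 'rV[R]_n) (S' : set 'rV[R]_n') :
  (forall v, S v -> exists2 w, S' w & enorm w <= enorm v) ->
  (dist0 S' <= dist0 S)%E.
Proof.
move=> H; apply: le_ereal_inf_tmp => _ [v Sv <-].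
have [w S'w le] := H v Sv.
apply: (le_trans (ereal_inf_lbound _)); first by exists w.
by rewrite lee_fin.
Qed.

Lemma dist0_ne n (S : set 'rV[R]_n) (x : R) : (dist0 S <= x%:E)%E -> exists v, S v.
Proof.
move=> H; apply: contrapT => hn.
have S0 : S = set0 by apply/seteqP; split=> v // Sv; apply: hn; exists v.
by move: H; rewrite /dist0 S0 image_set0 ereal_inf0.
Qed.

Lemma dist0_le n (S : set 'rV[R]_n) (x y : R) : (dist0 S <= x%:E)%E -> x <= y ->
  (dist0 S <= y%:E)%E.
Proof. by move=> H le; apply: (le_trans H); rewrite lee_fin. Qed.

Local Open Scope ereal_scope.

Lemma finM_inv (rho : R) (T : \bar R) : (0 < rho)%R -> rho%:E * T \is a fin_num ->
  T \is a fin_num.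
Proof.
move=> hr; case: T => [t||] //=.
  by rewrite mulry gtr0_sg // mul1e.
by rewrite mulrNy gtr0_sg // mul1e.
Qed.

Lemma L1 (f a b r rho : R) (F' : \bar R) :
  - (f%:E + rho%:E * (a%:E - b%:E)) + r%:E <= - (F' + rho%:E * (a%:E - b%:E)) ->
  - f%:E + r%:E <= - F'.
Proof.
case: F' => [x||] //=.
  rewrite -?EFinB -?EFinM -?EFinD -?EFinN -?EFinD !lee_fin => h.
  have e : (rho * (a - b) = rho * (a - b))%R by [].
  set k := (rho * (a - b))%R in h *. lra.
by move=> _; rewrite leey.
Qed.

Lemma L2 (f a b r rho : R) (B' : \bar R) : (0 < rho)%R ->
  - (f%:E + rho%:E * (a%:E - b%:E)) + (rho * r)%:E <= - (f%:E + rho%:E * (a%:E - B')) ->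
  b%:E + r%:E <= B'.
Proof.
move=> hr; case: B' => [x||] //=.
  rewrite -?EFinB -?EFinM -?EFinD -?EFinN -?EFinD !lee_fin => h.
  have : (rho * (b + r) <= rho * x)%R by nra.
  by rewrite ler_pM2l.
  by move=> _; rewrite leey.
by rewrite addey // mulry gtr0_sg // mul1e addey.
Qed.

Lemma L3 (f a b r rho : R) (A' : \bar R) : (0 < rho)%R ->
  - (f%:E + rho%:E * (a%:E - b%:E)) + (rho * r)%:E <= - (f%:E + rho%:E * (A' - b%:E)) ->
  - a%:E + r%:E <= - A'.
Proof.
move=> hr; case: A' => [x||] //=.
  rewrite -?EFinB -?EFinM -?EFinD -?EFinN -?EFinD !lee_fin => h.
  have : (rho * (x + r) <= rho * a)%R by nra.
  rewrite ler_pM2l //; lra.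
  rewrite addye // mulry gtr0_sg // mul1e addey //=.
by move=> _; rewrite leey.
Qed.

Lemma L4 (fa rho m l c : R) (T : \bar R) : (0 < rho)%R ->
  fa%:E + rho%:E * T <= m%:E -> (l <= fa)%R -> (rho^-1 * (m - l) <= c)%R ->
  T <= c%:E.
Proof.
move=> hr; case: T => [t||] //=; last by rewrite leNye.
  rewrite -?EFinM -?EFinD lee_fin => h1 h2 h3.
  have h4 : (m - l <= rho * c)%R by rewrite -ler_pdivrMl.
  rewrite lee_fin -(ler_pM2l hr); lra.
by rewrite mulry gtr0_sg // mul1e addey.
Qed.

Lemma L5 (I J : Type) (A : J -> \bar R) (B : I -> \bar R) (c : R) (i0 : I) (j0 : J) :
  (forall i j, A j - B i <= c%:E) -> A j0 \is a fin_num -> B i0 \is a fin_num ->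
  ereal_sup (range A) - ereal_inf (range B) <= c%:E.
Proof.
move=> H; case Ej0 : (A j0) => [a0| |] // _; case Ei0 : (B i0) => [b0| |] //= _.
have lbB : (a0 - c)%:E <= ereal_inf (range B).
  apply: le_ereal_inf_tmp => _ [i _ <-].
  have := H i j0; rewrite Ej0; case: (B i) => [x||] //=; last by rewrite leey.
  by rewrite -?EFinB !lee_fin => h; lra.
have ubB : ereal_inf (range B) <= b0%:E by rewrite -Ei0; apply: ereal_inf_lbound; exists i0.
move: lbB ubB; case Ed : (ereal_inf (range B)) => [d| |] //= h1 h2.
have ubA : ereal_sup (range A) <= (d + c)%:E.
  apply: ge_ereal_sup => _ [j _ <-].
  have hh : forall i, A j - c%:E <= B i.
    move=> i; have := H i j; case: (A j) => [x||]; case: (B i) => [y||] //=;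
      rewrite ?leey ?leNye //.
    by rewrite -?EFinB !lee_fin => h; lra.
  have : A j - c%:E <= ereal_inf (range B).
    by apply: le_ereal_inf_tmp => _ [i _ <-].
  rewrite Ed; case: (A j) => [x||] //=; rewrite ?leNye //.
  by rewrite -?EFinB !lee_fin => h; lra.
have lbA : a0%:E <= ereal_sup (range A) by rewrite -Ej0; apply: ereal_sup_ubound; exists j0.
move: ubA lbA; case: (ereal_sup (range A)) => [p||] //=.
by rewrite -?EFinB !lee_fin => h _; lra.
Qed.

Lemma fin_lt (x : \bar R) : x \is a fin_num -> x < +oo.
Proof. by case: x => [x||]; rewrite ?ltry. Qed.

Lemma L6 (M Lo : \bar R) (k rho q q' : R) : (0 < rho)%R ->
  rho^-1%:E * (M - Lo) <= k%:E -> q%:E <= M -> Lo <= q'%:E ->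
  exists m l, M = m%:E /\ Lo = l%:E.
Proof.
move=> hr; have hi : (0 < rho^-1)%R by rewrite invr_gt0.
move: M Lo => [m||] [l||] //=; try by exists m, l.
all: by rewrite mulry gtr0_sg // mul1e.
Qed.

Lemma diffA a b c (x x' : 'rV[R]_a) (y : 'rV[R]_b) (z : 'rV[R]_c) :
  (row_mx x' (row_mx y z) - row_mx x (row_mx y z) = row_mx (x' - x) 0)%R.
Proof. by rewrite opp_row_mx add_row_mx opp_row_mx add_row_mx !subrr row_mx0. Qed.
Lemma diffB a b c (x : 'rV[R]_a) (y y' : 'rV[R]_b) (z : 'rV[R]_c) :
  (row_mx x (row_mx y' z) - row_mx x (row_mx y z) = row_mx 0 (row_mx (y' - y) 0))%R.
Proof. by rewrite opp_row_mx add_row_mx opp_row_mx add_row_mx !subrr. Qed.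
Lemma diffC a b c (x : 'rV[R]_a) (y : 'rV[R]_b) (z z' : 'rV[R]_c) :
  (row_mx x (row_mx y z') - row_mx x (row_mx y z) = row_mx 0 (row_mx 0 (z' - z)))%R.
Proof. by rewrite opp_row_mx add_row_mx opp_row_mx add_row_mx !subrr. Qed.

Lemma dotA a b c (v : 'rV[R]_(a + (b + c))) d :
  dotv v (row_mx d 0) = dotv (lsubmx v) d.
Proof. by rewrite -{1}(hsubmxK v) dotv_row dotv0r addr0. Qed.
Lemma dotB a b c (v : 'rV[R]_(a + (b + c))) d :
  dotv v (row_mx 0 (row_mx d 0)) = dotv (lsubmx (rsubmx v)) d.
Proof.
by rewrite -{1}(hsubmxK v) -{1}(hsubmxK (rsubmx v)) !dotv_row !dotv0r addr0 add0r.
Qed.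
Lemma dotC a b c (v : 'rV[R]_(a + (b + c))) d :
  dotv v (row_mx 0 (row_mx 0 d)) = dotv (rsubmx (rsubmx v)) d.
Proof.
by rewrite -{1}(hsubmxK v) -{1}(hsubmxK (rsubmx v)) !dotv_row !dotv0r !add0r.
Qed.
Lemma enB a b c (d : 'rV[R]_b) : enorm (row_mx (0 : 'rV[R]_a) (row_mx d (0 : 'rV[R]_c))) = enorm d.
Proof. by rewrite enorm_row0l enorm_row0r. Qed.
Lemma enC a b c (d : 'rV[R]_c) : enorm (row_mx (0 : 'rV[R]_a) (row_mx (0 : 'rV[R]_b) d)) = enorm d.
Proof. by rewrite !enorm_row0l. Qed.
End Helpers.
Arguments dist0_ne {R n S x}.
Arguments finM_inv {R rho T}.
Arguments dist0_le {R n S x y}.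
Arguments dist0_mono {R n n' S S'}.

Theorem lemma4p2 (R : realType) (n1 n2 m1 m2 : nat)
  (f1 : 'rV[R]_n1 -> 'rV[R]_n2 -> 'rV[R]_m1 -> 'rV[R]_m2 -> R)
  (f2 : 'rV[R]_n1 -> \bar R) (f3 : 'rV[R]_n2 -> \bar R)
  (tf1 : 'rV[R]_n1 -> 'rV[R]_m1 -> 'rV[R]_m2 -> R)
  (tf2 : 'rV[R]_m1 -> \bar R) (tf3 : 'rV[R]_m2 -> \bar R)
  (Lf Ltf : R) :
  standing_assumptions f1 f2 f3 tf1 tf2 tf3 Lf Ltf ->
  forall C : R, 0 <= C ->
  exists C' : R, 0 <= C' /\
  forall (rho eps : R), 0 < rho -> 0 < eps ->
  forall (x1 : 'rV[R]_n1) (y1 : 'rV[R]_m1) (y2 : 'rV[R]_m2)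
         (x2 : 'rV[R]_n2) (z1 : 'rV[R]_m1) (z2 : 'rV[R]_m2),
  pd_stationary f1 f2 f3 tf1 tf2 tf3 rho eps x1 y1 y2 x2 z1 z2 ->
  ((rho^-1)%:E * (maxPen f1 f2 f3 tf1 tf2 tf3 rho x1 y1 y2
                  - flow f1 f2 f3 tf2 tf3) <= (C * eps)%:E)%E ->
  eps_KKT f1 f2 f3 tf1 tf2 tf3 (C' * eps) x1 y1 y2.
Proof.
move=> _ C hC; exists (C + 1); split; first lra.
move=> rho eps hr he x1 y1 y2 x2 z1 z2 [PS1 PS2] Hmax.
have hle1 : eps <= (C + 1) * eps by nra.
have hle2 : C * eps <= (C + 1) * eps by nra.
have [v0 [Fv0 _]] := dist0_ne PS2.
move: Fv0; rewrite /blkA /blkB /blkC !(row_mxKl, row_mxKr) fin_numN /Pen.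
rewrite fin_numD => /andP[FF FT].
have := finM_inv hr FT; rewrite fin_numD fin_numN => /andP[FA FB].
move: FF FA FB.
case EF : (fF f1 f2 f3 x1 x2 y1 y2) => [fa| |] //= _.
case EA : (tfF tf1 tf2 tf3 x1 y1 z2) => [a| |] //= _.
case EB : (tfF tf1 tf2 tf3 x1 z1 y2) => [b| |] //= _.
exists rho; split; first exact: ltW.
exists x2, z1, z2; split.
- exact: dist0_le PS1 hle1.
- apply: (dist0_le _ hle1); apply: le_trans PS2; apply: dist0_mono => v [_ Hv].
  exists (lsubmx v); last exact: enorm_lsub.
  split; first by rewrite EF.
  move=> e he'; have [d [hd Hd]] := Hv e he'; exists d; split => // x' hx'.
  have := Hd (row_mx x' (row_mx z1 z2)).
  rewrite diffA enorm_row0r dotA => /(_ hx').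
  rewrite /blkA /blkB /blkC !(row_mxKl, row_mxKr) /Pen EF EA EB /=.
  exact: L1.
- apply: (dist0_le _ hle1); apply: le_trans PS2; apply: dist0_mono => v [_ Hv].
  exists (lsubmx (rsubmx v)); last first.
    exact: le_trans (@enorm_lsub _ _ _ (rsubmx v)) (@enorm_rsub _ _ _ v).
  exists (rho^-1 *: lsubmx (rsubmx v)); last first.
    by rewrite scalerA mulfV ?gt_eqF // scale1r.
  split; first by rewrite EB.
  move=> e he'; have [d [hd Hd]] := Hv (rho * e) (mulr_gt0 hr he').
  exists d; split => // x' hx'.
  have := Hd (row_mx x2 (row_mx x' z2)).
  rewrite diffB enB dotB => /(_ hx').
  rewrite /blkA /blkB /blkC !(row_mxKl, row_mxKr) /Pen EF EA EB /=.
  have -> : dotv (lsubmx (rsubmx v)) (x' - z1) - rho * e * enorm (x' - z1)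
      = rho * (dotv (rho^-1 *: lsubmx (rsubmx v)) (x' - z1) - e * enorm (x' - z1)).
    by rewrite dotvZl mulrBr mulrA mulfV ?gt_eqF // mul1r mulrA.
  exact: L2.
- apply: (dist0_le _ hle1); apply: le_trans PS2; apply: dist0_mono => v [_ Hv].
  exists (rsubmx (rsubmx v)); last first.
    exact: le_trans (@enorm_rsub _ _ _ (rsubmx v)) (@enorm_rsub _ _ _ v).
  exists (rho^-1 *: rsubmx (rsubmx v)); last first.
    by rewrite scalerA mulfV ?gt_eqF // scale1r.
  split; first by rewrite /= EA.
  move=> e he'; have [d [hd Hd]] := Hv (rho * e) (mulr_gt0 hr he').
  exists d; split => // x' hx'.
  have := Hd (row_mx x2 (row_mx z1 x')).
  rewrite diffC enC dotC => /(_ hx').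
  rewrite /blkA /blkB /blkC !(row_mxKl, row_mxKr) /Pen EF EA EB /=.
  have -> : dotv (rsubmx (rsubmx v)) (x' - z2) - rho * e * enorm (x' - z2)
      = rho * (dotv (rho^-1 *: rsubmx (rsubmx v)) (x' - z2) - e * enorm (x' - z2)).
    by rewrite dotvZl mulrBr mulrA mulfV ?gt_eqF // mul1r mulrA.
  exact: L3.
- have hF : fF f1 f2 f3 x1 x2 y1 y2 \is a fin_num by rewrite EF.
  have hA : tfF tf1 tf2 tf3 x1 y1 z2 \is a fin_num by rewrite EA.
  have hB : tfF tf1 tf2 tf3 x1 z1 y2 \is a fin_num by rewrite EB.
  move: hF; rewrite /fF !fin_numD fin_numN => /andP[/andP[_ h2] h3].
  move: hA; rewrite /tfF !fin_numD fin_numN => /andP[/andP[_ h4] _].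
  move: hB; rewrite /tfF !fin_numD fin_numN => /andP[_ h5].
  have Pm : ((fa + rho * (a - b))%:E <= maxPen f1 f2 f3 tf1 tf2 tf3 rho x1 y1 y2)%E.
    rewrite EFinD EFinM EFinB -EF -EA -EB.
    by apply: ereal_sup_ubound; exists ((x2, z1), z2).
  have Fl : (flow f1 f2 f3 tf2 tf3 <= fa%:E)%E.
    rewrite -EF; apply: ereal_inf_lbound; exists x1, x2, y1, y2; split => //.
    - exact: fin_lt.
    - exact: fin_lt.
    - exact: fin_lt.
    - exact: fin_lt.
  have [m [l [Em El]]] := L6 _ _ _ _ _ _ hr Hmax Pm Fl.
  move: Hmax; rewrite Em El -EFinB -EFinM lee_fin => hml.
  move: Fl; rewrite El lee_fin => hl.
  rewrite /pfun /dfun; apply: (@L5 _ _ _ _ _ _ z1 z2); last 2 first.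
  - by rewrite EA.
  - by rewrite EB.
  move=> i j; apply: (@le_trans _ _ (C * eps)%:E); last by rewrite lee_fin.
  apply: (@L4 _ fa rho m l) => //.
  rewrite -Em -EF; apply: ereal_sup_ubound; by exists ((x2, i), j).
Qed.
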